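(* Let $T$ be a nontrivial finite $2$-group and $H$ a finite group of odd order such that $d(T\times H)=3$. Then $\mathsf{GEN}(T\times H)=*0$.
   Context: For a finite group $G$, $\mathsf{GEN}(G)$ is the following impartial two-player game. A position is a set of elements selected so far; the starting position is $\emptyset$. From a position $P$ with $\langle P\rangle\neq G$, the player to move selects some $g\in G\setminus P$, producing the position $P\cup\{g\}$ (these are the options of $P$); a position $P$ with $\langle P\rangle = G$ has no options. The nim-number of a position is defined recursively by $\operatorname{nim}(P)=\operatorname{mex}\{\operatorname{nim}(Q): Q \text{ an option of } P\}$, where $\operatorname{mex}(A)$ is the least nonnegative integer not in $A$. We write $\mathsf{GEN}(G)=*n$ if $\operatorname{nim}(\emptyset)=n$. $d(G)$ denotes the minimum size of a generating set of $G$. *)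

(* Defs.v *)
From HB Require Import structures.
From mathcomp Require Import all_boot all_fingroup all_solvable.
Set Implicit Arguments. Unset Strict Implicit. Unset Printing Implicit Defensive.
Import GroupScope.

(* mex of a finite list of naturals: least n not in s (always <= size s). *)
Definition mex (s : seq nat) : nat :=
  find (fun n => n \notin s) (iota 0 (size s).+1).

Section Gen.
Variable gT : finGroupType.
Implicit Types (G : {group gT}) (P : {set gT}).

(* Positions P with <<P>> = G are terminal; otherwise the options are
   P :|: [set g] for g in G :\: P.  Every play has length <= #|G|,
   so fuel #|G|.+1 suffices for the empty position. *)
Fixpoint nim_fuel G (k : nat) P : nat :=
  match k with
  | 0 => 0
  | k'.+1 =>
      if <<P>> == (G : {set gT}) then 0
      else mex [seq nim_fuel G k' (g |: P) | g <- enum (G :\: P)]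
  end.

Definition GEN G : nat := nim_fuel G #|G|.+1 set0.

Lemma dgen_ex G :
  exists n, [exists A : {set gT}, [&& A \subset G, <<A>> == G & #|A| == n]].
Proof.
exists #|G|; apply/existsP; exists (G : {set gT}).
by rewrite subxx genGid !eqxx.
Qed.

Definition dgen G : nat := ex_minn (dgen_ex G).
End Gen.

(* Main.v *)
Require Import Defs.
From mathcomp Require Import all_boot all_fingroup all_solvable zify.
Set Implicit Arguments. Unset Strict Implicit. Unset Printing Implicit Defensive.
Import GroupScope.

Lemma mex0 (s : seq nat) : 0 \notin s -> mex s = 0.
Proof. by rewrite /mex /= => ->. Qed.

Lemma mexN0 (s : seq nat) : 0 \in s -> mex s != 0.
Proof. by rewrite /mex /= => ->. Qed.

Section Game.
Variable gT : finGroupType.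
Implicit Types (A B P Q : {set gT}).

Lemma genU1 a P : a \in <<P>> -> <<a |: P>> = <<P>>.
Proof.
move=> aP; apply/eqP; rewrite eqEsubset gen_subG subUset sub1set aP subset_gen /=.
exact: genS (subsetUr _ _).
Qed.

Lemma cardDU1 A B a : a \in A :\: B -> #|A :\: B| = (#|A :\: (a |: B)|).+1.
Proof.
move=> aAB; rewrite (cardsD1 a (A :\: B)) aAB add1n.
have -> : A :\: B :\ a = A :\: (a |: B).
  by apply/setP=> y; rewrite !inE negb_or andbA.
by [].
Qed.

Variable G : {group gT}.

Hypothesis dG : dgen G = 3.

Lemma small_ngen A : A \subset G -> #|A| < 3 -> <<A>> != G.
Proof.
move=> AG cA; apply/eqP=> genA.
have ex : [exists B : {set gT}, [&& B \subset G, <<B>> == G & #|B| == #|A|]].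
  by apply/existsP; exists A; rewrite AG genA !eqxx.
move: dG; rewrite /dgen; case: ex_minnP => m _ /(_ _ ex) mA em.
by move: cA; rewrite ltnNge -em mA.
Qed.

Variable x : gT.
Hypothesis xG : x \in G.
Hypothesis x1 : x != 1.
Hypothesis xx : x * x = 1.

Definition cold P := forall h, h \in G -> <<h |: P>> != G.

Lemma claimA k : forall P, P != set0 -> (forall p, p \in P -> p * x \in P) ->
  cold P -> #|G :\: P| < k -> nim_fuel G k P = 0.
Proof.
elim/ltn_ind: k => k IH P Pn0 Px cP Hk.
case: k IH Hk => [//|k] IH Hk /=.
have [p pP] := set0Pn _ Pn0.
have xP : x \in <<P>>.
  have -> : x = p^-1 * (p * x) by rewrite mulKg.
  by rewrite groupM ?groupV ?mem_gen // Px.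
have := cP 1 (group1 _); rewrite genU1 ?group1 // => /negbTE ->.
apply: mex0; apply/mapP => -[g]; rewrite mem_enum => gGP E.
have /andP[gnP gG] : (g \notin P) && (g \in G) by rewrite inE in gGP.
have : 0 < #|G :\: P| by apply/card_gt0P; exists g.
case: k IH Hk E => [|k] IH Hk E; first by move=> c; move: Hk; rewrite ltnNge c.
move=> _; move: E => /eqP; apply/negP; rewrite eq_sym /=.
have := cP g gG => /negbTE ->.
apply: mexN0.
case: (boolP [exists h in G, <<h |: (g |: P)>> == G]).
  case/existsP => h /andP[hG hgen]; apply/mapP; exists h.
    rewrite mem_enum inE hG andbT; apply/negP => hQ.
    by move: hgen; rewrite genU1 ?mem_gen // (negbTE (cP g gG)).
  by case: k {IH Hk} => //= k; rewrite hgen.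
move=> cQ.
have gxQ : g * x \in G :\: (g |: P).
  rewrite !inE groupM // andbT negb_or; apply/andP; split.
    by apply/eqP => gxg; move/eqP: x1; apply; rewrite -(mulKg g x) gxg mulVg.
  by apply/negP=> /Px; rewrite -mulgA xx mulg1 (negbTE gnP).
apply/mapP; exists (g * x); first by rewrite mem_enum.
apply/esym/IH => //.
- by apply/set0Pn; exists (g * x); rewrite setU11.
- move=> q /setU1P[->|/setU1P[->|qP]].
  + by rewrite -mulgA xx mulg1 setU1r ?setU11.
  + by rewrite setU11.
  + by rewrite !setU1r ?Px.
- move=> h hG; rewrite (setUCA [set h]) genU1.
    apply: contra cQ => hh; apply/existsP; exists h; by rewrite hG hh.
  have sP : P \subset <<h |: (g |: P)>>.
    by apply/subsetP => q qP; rewrite mem_gen // !setU1r.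
  move: sP; rewrite -gen_subG => /subsetP sub.
  apply: groupM; last exact: sub.
  by apply: mem_gen; rewrite setU1r ?setU11.
- by move: Hk; rewrite (cardDU1 gGP) (cardDU1 gxQ) !ltnS.
Qed.
End Game.

Lemma pick (aT bT : finGroupType) (T : {group aT}) (H : {group bT}) g :
  pgroup 2 T -> T :!=: 1%g -> g \in setX T H ->
  exists x z, [/\ x \in setX T H, x != 1, x * x = 1 &
      [/\ z \in setX T H, g \in <[z]> & g * x \in <[z]>]].
Proof.
move=> pT ntT gG.
have E : forall u v : aT * bT, u * v = (u.1 * v.1, u.2 * v.2) by [].
have E1 : (1 : aT * bT) = (1, 1) by [].
have [oddg|eveng] := boolP (odd #[g]).
  have ntZ : 'Z(T) != 1 by rewrite center_nil_eq1 // (pgroup_nil pT).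
  have pZ : pgroup 2 'Z(T) := pgroupS (center_sub T) pT.
  have [pr2 dv2 _] := pgroup_pdiv pZ ntZ.
  have [t tZ ot] := Cauchy pr2 dv2.
  have [tT ctT] := centerP _ _ tZ.
  pose x : aT * bT := (t, 1).
  have xx : x * x = 1.
    have tt : t * t = 1 by have := expg_order t; rewrite ot expgS expg1.
    by rewrite E E1 /= tt mulg1.
  have xG : x \in setX T H by rewrite /x in_setX tT group1.
  have x1 : x != 1.
    apply/eqP => /(congr1 fst) /= t1.
    by move: ot; rewrite t1 order1.
  have cgx : commute g x.
    move: gG; rewrite inE => /andP[g1T _].
    rewrite /commute !E /= mulg1 mul1g. have := ctT _ g1T. rewrite /commute => ->. done.
  have xn : x ^+ #[g] = x.
    rewrite -(odd_double_half #[g]) oddg -muln2 expgD expg1 mulnC expgM.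
    by rewrite expgS expg1 xx expg1n mulg1.
  have xz : x \in <[g * x]>.
    have xe : x = (g * x) ^+ #[g] by rewrite expgMn // expg_order mul1g xn.
    rewrite {1}xe.
    exact: mem_cycle.
  exists x, (g * x); split => //; split; rewrite ?cycle_id ?groupM //.
  by rewrite -{1}(mulgK x g) groupM ?cycle_id // groupV.
pose m := #[g]./2.
have em : #[g] = m.*2.
  by rewrite -{1}(odd_double_half #[g]) (negbTE eveng).
exists (g ^+ m), g; split; [by rewrite groupX | | | split].
- apply/negP; rewrite -order_dvdn => /dvdn_leq.
  have mp : 0 < m by move: (order_gt0 g); rewrite em double_gt0.
  rewrite em mp -addnn => /(_ isT); lia.
- by rewrite -expgnDr addnn -em expg_order.
- by [].
- exact: cycle_id.
- by rewrite groupM ?cycle_id ?mem_cycle.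
Qed.

Theorem proposition4p5 (aT bT : finGroupType) (T : {group aT}) (H : {group bT}) :
  pgroup 2 T -> T :!=: 1%g -> odd #|H| ->
  dgen (setX_group T H) = 3 -> GEN (setX_group T H) = 0.
Proof.
move=> pT ntT oH dG.
set G := setX_group T H.
rewrite /GEN /=.
rewrite (negbTE (small_ngen dG (sub0set G) _)); last by rewrite cards0.
apply: mex0; apply/mapP => -[g]; rewrite mem_enum setD0 => gG E.
have : 0 < #|G| by apply/card_gt0P; exists g.
case cG: #|G| E => [//|n] E _.
move: E => /eqP; apply/negP; rewrite eq_sym /= setU0.
rewrite (negbTE (small_ngen dG _ _)) ?sub1set ?cards1 //.
apply: mexN0.
have [x [z [xG x1 xx [zG gz gxz]]]] := pick pT ntT gG.
have gxQ : g * x \in G :\: [set g].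
  rewrite in_setD in_set1 groupM // andbT.
  by apply/eqP => gxg; move/eqP: x1; apply; rewrite -(mulKg g x) gxg mulVg.
apply/mapP; exists (g * x); first by rewrite mem_enum.
apply/esym/(claimA xG x1 xx).
- by apply/set0Pn; exists (g * x); rewrite setU11.
- move=> q /setU1P[->|/set1P->].
  + by rewrite -mulgA xx mulg1 setU1r ?set11.
  + by rewrite setU11.
- move=> h hG; apply/negP => /eqP hgen.
  have sz : <[z]> \subset <<[set h; z]>>.
    by rewrite cycle_subG mem_gen // !inE eqxx orbT.
  have s2 : [set h; z] \subset G by rewrite subUset !sub1set hG zG.
  have c2 : #|[set h; z]| < 3 by rewrite cards2; case: (h != z).
  have hz := @small_ngen _ G dG [set h; z] s2 c2.
  apply: (negP hz).
  rewrite eqEsubset gen_subG subUset !sub1set hG zG /=.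
  rewrite -hgen gen_subG !subUset !sub1set mem_gen ?setU11 //=.
  by rewrite !(subsetP sz).
- have gG' : g \in G :\: set0 by rewrite setD0.
  have := cardDU1 gG'; rewrite setD0 setU0 cG (cardDU1 gxQ).
  by case => ->.
Qed.
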